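(* Let $R$ be a commutative ring which is free as an abelian group with $\mathbb{Z}$-basis $V$, let $n\ge2$, $p$ a prime and $r\ge1$. Then $$\Gamma(SL_n(R),p^r)/\Gamma(SL_n(R),p^{r+1})\cong\bigoplus_{n^2-1}\mathbb{F}_p[V].$$
   Context: $\Gamma(SL_n(R),p^m)=\ker\big(SL_n(R)\to SL_n(R\otimes_{\mathbb{Z}}\mathbb{Z}/p^m)\big)$. $\mathbb{F}_p[V]$ denotes the $\mathbb{F}_p$-vector space with basis $V$ (equivalently the additive group of $R/pR$); the right-hand side is a direct sum of $n^2-1$ copies. *)

(* Defs.v *)
From mathcomp Require Import all_boot all_order all_algebra.
Set Implicit Arguments. Unset Strict Implicit. Unset Printing Implicit Defensive.
Import GRing.Theory.
Local Open Scope ring_scope.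

Definition is_Zbasis (R : comRingType) (V : eqType) (b : V -> R) : Prop :=
  (forall x : R, exists (s : seq V) (c : V -> int),
      x = \sum_(v <- s) (b v *~ c v)) /\
  (forall (s : seq V) (c : V -> int), uniq s ->
      \sum_(v <- s) (b v *~ c v) = 0 -> forall v, v \in s -> c v = 0).

(* Gamma(SL_n(R), q) = kernel of SL_n(R) -> SL_n(R (x)_Z Z/q) = SL_n(R/qR):
   determinant 1 and A = 1 entrywise modulo q R. *)
Definition in_Gamma (R : comRingType) (n q : nat) (A : 'M[R]_n) : Prop :=
  \det A = 1 /\
  forall i j, exists y : R, (A - 1%:M) i j = q%:R * y.

(* finitely supported functions V -> F_p : elements of F_p[V] *)
Definition fin_supp (V : eqType) (K : nmodType) (f : V -> K) : Prop :=
  exists s : seq V, forall v, v \notin s -> f v = 0.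

(* [phi] induces a group isomorphism
     Gamma(q1) / Gamma(q2)  ~=  (+)_{i < k} F_p[V]
   (first isomorphism theorem form): phi is a homomorphism from Gamma(q1)
   into the direct sum of k copies of F_p[V], onto it, with kernel Gamma(q2). *)
Definition induces_quotient_iso (R : comRingType) (n q1 q2 : nat)
    (V : eqType) (K : zmodType) (k : nat)
    (phi : 'M[R]_n -> 'I_k -> V -> K) : Prop :=
  [/\ (forall A, in_Gamma q1 A -> forall i, fin_supp (phi A i)),
      (forall A B, in_Gamma q1 A -> in_Gamma q1 B ->
          forall i v, phi (A *m B) i v = phi A i v + phi B i v),
      (forall A, in_Gamma q1 A ->
          ((forall i v, phi A i v = 0) <-> in_Gamma q2 A)) &
      (forall f : 'I_k -> V -> K, (forall i, fin_supp (f i)) ->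
          exists A, in_Gamma q1 A /\ forall i v, phi A i v = f i v)].

(* Main.v *)
Require Import Defs.
From mathcomp Require Import all_boot all_order all_fingroup all_algebra ring zify.
From Stdlib Require Import ClassicalEpsilon.
Set Implicit Arguments. Unset Strict Implicit. Unset Printing Implicit Defensive.
Import GRing.Theory Num.Theory.
Local Open Scope ring_scope.

Section Mx.
Variable R : comRingType.

Definition Dv (m : nat) (x : R) : Prop := exists y, x = m%:R * y.

Lemma Dv0 m : Dv m 0. Proof. by exists 0; rewrite mulr0. Qed.
Lemma DvD m x y : Dv m x -> Dv m y -> Dv m (x + y).
Proof. by move=> [a ->] [c ->]; exists (a + c); rewrite mulrDr. Qed.
Lemma DvN m x : Dv m x -> Dv m (- x).
Proof. by move=> [a ->]; exists (- a); rewrite mulrN. Qed.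
Lemma DvMl m x y : Dv m x -> Dv m (y * x).
Proof. by move=> [a ->]; exists (y * a); rewrite mulrCA. Qed.
Lemma Dv_sum m (I : Type) (s : seq I) (P : pred I) (F : I -> R) :
  (forall i, P i -> Dv m (F i)) -> Dv m (\sum_(i <- s | P i) F i).
Proof.
move=> H; apply: (big_ind (Dv m)); [exact: Dv0 | exact: DvD | exact: H].
Qed.
Lemma Dv_dvd m m' x : (m %| m')%N -> Dv m' x -> Dv m x.
Proof.
move=> /dvdnP [k ->] [a ->]; exists (k%:R * a); by rewrite natrM mulrCA mulrA.
Qed.

Lemma prod_lin n (q : R) (y : 'I_n -> R) :
  exists z, \prod_(i < n) (1 + q * y i) = 1 + q * \sum_(i < n) y i + q * q * z.
Proof.
elim: n y => [|n IH] y.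
- by exists 0; rewrite !big_ord0; ring.
- rewrite big_ord_recr big_ord_recr /=.
  have [z ->] := IH (fun i => y (widen_ord (leqnSn n) i)).
  exists (z + (\sum_(i < n) y (widen_ord (leqnSn n) i)) * y ord_max + q * z * y ord_max).
  ring.
Qed.

Lemma det_lin n (q : nat) (Y : 'M[R]_n) :
  Dv (q * q) (\det (1%:M + q%:R *: Y) - 1 - q%:R * \tr Y).
Proof.
rewrite /determinant (bigD1 (1%g : 'S_n)) //= odd_perm1 expr0 mul1r.
have -> : \prod_(i < n) (1%:M + q%:R *: Y) i ((1%g : 'S_n) i) = \prod_(i < n) (1 + q%:R * Y i i).
  by apply: eq_bigr => i _; rewrite perm1 !mxE eqxx mulr1n.
have [z ->] := prod_lin (q%:R) (fun i => Y i i).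
set S := \sum_(s | s != 1%g) _.
rewrite [X in Dv _ X](_ : _ = (q * q)%:R * z + S); last by rewrite /mxtrace natrM; ring.
apply: DvD; first by exists z.
apply: Dv_sum => s hs; apply: DvMl.
have [i hi] : exists i, s i != i.
  apply/existsP; apply: contraR hs => /existsPn h; apply/eqP/permP => i.
  by rewrite perm1; apply/eqP/negPn/h.
have hj : s (s i) != s i.
  by apply: contra hi => /eqP e; apply/eqP; apply: (@perm_inj _ s).
have e1 : (i == s i) = false by rewrite eq_sym (negbTE hi).
have e2 : (s i == s (s i)) = false by rewrite eq_sym (negbTE hj).
rewrite (bigD1 i) // (bigD1 (s i)) //= !mxE e1 e2 !mulr0n !add0r.
by eexists; rewrite natrM -!mulrA; congr (_ * _); rewrite mulrCA.
Qed.

Definition E n (i j : 'I_n) (c : R) : 'M[R]_n := 1%:M + c *: delta_mx i j.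

Lemma E_tr n (i j : 'I_n) c : (E i j c)^T = E j i c.
Proof.
apply/matrixP => a b; rewrite !mxE [b == a]eq_sym; congr (_ + _ * _).
by rewrite andbC.
Qed.

Lemma det_E n (i j : 'I_n) c : i != j -> \det (E i j c) = 1.
Proof.
wlog lt : i j / (j < i)%N.
  move=> H ij; case: (ltngtP i j) => [h|h|h].
  - rewrite -det_tr E_tr; apply: H => //; by rewrite eq_sym.
  - exact: H.
  - by move: ij; rewrite (val_inj h) eqxx.
move=> ij; rewrite det_trig.
- rewrite big1 // => a _; rewrite !mxE eqxx mulr1n.
  have -> : (a == i) && (a == j) = false.
    by apply/negbTE; apply: contra ij => /andP[/eqP <- /eqP <-].
  by rewrite mulr0 addr0.
- apply/forallP => a; apply/forallP => c'; apply/implyP => h.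
  rewrite !mxE.
  have -> : (a == c') = false by apply/negbTE; rewrite neq_ltn h.
  have -> : (a == i) && (c' == j) = false.
    apply/negbTE/negP => /andP[/eqP ai /eqP cj]; move: h lt; rewrite ai cj; lia.
  by rewrite mulr0 addr0.
Qed.

Lemma E_mul n (i j : 'I_n) (a c : R) : i != j -> E i j a *m E i j c = E i j (a + c).
Proof.
move=> ij; rewrite /E mulmxDl !mulmxDr !mul1mx mulmx1 -scalemxAl -scalemxAr.
rewrite mul_delta_mx_cond eq_sym (negbTE ij) mulr0n.
by apply/matrixP => x y; rewrite !mxE; ring.
Qed.

Lemma D_eq n (i j : 'I_n) (c : R) : i != j ->
  E i j 1 *m E j i c *m E i j (-1) =
  1%:M + c *: (delta_mx j i + delta_mx i i - delta_mx j j - delta_mx i j).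
Proof.
move=> ij; rewrite /E.
rewrite !(mulmxDl, mulmxDr, mul1mx, mulmx1, mul_delta_mx_cond, =^~ scalemxAl, =^~ scalemxAr, eqxx, mulr1n).
rewrite eq_sym (negbTE ij) mulr0n.
by apply/matrixP => x y; rewrite !mxE; ring.
Qed.

Lemma mul_gam n (q : nat) (A B Y Z : 'M[R]_n) :
  A - 1%:M = q%:R *: Y -> B - 1%:M = q%:R *: Z ->
  A *m B - 1%:M = q%:R *: (Y + Z + q%:R *: (Y *m Z)).
Proof.
move=> eA eB.
have -> : A = 1%:M + q%:R *: Y by rewrite -eA addrC subrK.
have -> : B = 1%:M + q%:R *: Z by rewrite -eB addrC subrK.
rewrite mulmxDl !mulmxDr !mul1mx mulmx1 -scalemxAl -scalemxAr.
by apply/matrixP => x y; rewrite !mxE; ring.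
Qed.

End Mx.

Section Coord.
Variables (R : comRingType) (V : eqType) (b : V -> R).
Hypothesis hb : is_Zbasis b.

Definition Rep (x : R) (S : seq V) (d : V -> int) :=
  [/\ uniq S, (forall v, v \notin S -> d v = 0) & x = \sum_(v <- S) b v *~ d v].

Lemma sum_ext (S S' : seq V) (F : V -> R) : uniq S -> uniq S' -> {subset S <= S'} ->
  (forall v, v \notin S -> F v = 0) -> \sum_(v <- S') F v = \sum_(v <- S) F v.
Proof.
move=> uS uS' sub F0.
rewrite (bigID (mem S)) /= [X in _ + X]big1 ?addr0; last by move=> v /F0.
rewrite -big_filter; apply: perm_big; apply: uniq_perm.
- exact: filter_uniq.
- exact: uS.
- move=> v; rewrite mem_filter; apply/andP/idP => [[]//|vS]; split=> //; exact: sub.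
Qed.

Lemma Rep_add x y S1 S2 d1 d2 : Rep x S1 d1 -> Rep y S2 d2 ->
  Rep (x + y) (undup (S1 ++ S2)) (fun v => d1 v + d2 v).
Proof.
case=> u1 z1 e1 [u2 z2 e2]; split.
- exact: undup_uniq.
- by move=> v; rewrite mem_undup mem_cat negb_or => /andP[/z1 -> /z2 ->].
- under eq_bigr do rewrite mulrzDr.
  rewrite big_split /= e1 e2; congr (_ + _); symmetry; apply: sum_ext => //;
    try exact: undup_uniq.
  + by move=> v vS; rewrite mem_undup mem_cat vS.
  + by move=> v /z1 ->; rewrite mulr0z.
  + by move=> v vS; rewrite mem_undup mem_cat vS orbT.
  + by move=> v /z2 ->; rewrite mulr0z.
Qed.

Lemma Rep_scale x S d (k : int) : Rep x S d -> Rep (x *~ k) S (fun v => d v * k).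
Proof.
case=> u z e; split=> //.
- by move=> v /z ->; rewrite mul0r.
- by rewrite e mulrz_suml; apply: eq_bigr => v _; rewrite mulrzA.
Qed.

Lemma Rep_single a (k : int) : Rep (b a *~ k) [:: a] (fun v => if v == a then k else 0).
Proof.
split=> //.
- by move=> v; rewrite inE => /negbTE ->.
- by rewrite big_seq1 eqxx.
Qed.

Lemma Rep_exists x : exists d, exists S, Rep x S d.
Proof.
case: hb => hs _; have [s [c ->]] := hs x.
elim: s => [|a s [d [S H]]].
- by exists (fun=> 0), [::]; split=> //; rewrite !big_nil.
- rewrite big_cons; eexists; eexists; exact: Rep_add (Rep_single a (c a)) H.
Qed.

Lemma Rep_uniq x S1 S2 d1 d2 : Rep x S1 d1 -> Rep x S2 d2 -> forall v, d1 v = d2 v.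
Proof.
move=> H1 H2; have := Rep_add H1 (Rep_scale (-1) H2); have -> : x + x *~ -1 = 0 by rewrite mulrNz mulr1z subrr.
case=> u z e v.
case: (boolP (v \in undup (S1 ++ S2))) => vin.
- case: hb => _ hi; have := hi _ _ u (esym e) v vin; rewrite mulrN1 => /eqP; rewrite subr_eq0 => /eqP //.
- have := z v vin; rewrite mulrN1 => /eqP; rewrite subr_eq0 => /eqP //.
Qed.

Definition coef (x : R) : V -> int :=
  proj1_sig (constructive_indefinite_description _ (Rep_exists x)).

Lemma coefP x : exists S, Rep x S (coef x).
Proof. exact: proj2_sig (constructive_indefinite_description _ (Rep_exists x)). Qed.

Lemma coef_rep x S d : Rep x S d -> forall v, coef x v = d v.
Proof. by move=> H v; have [S' H'] := coefP x; exact: Rep_uniq H' H v. Qed.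

Lemma coefD x y v : coef (x + y) v = coef x v + coef y v.
Proof.
have [S1 H1] := coefP x; have [S2 H2] := coefP y.
exact: coef_rep (Rep_add H1 H2) v.
Qed.

Lemma coefZ x (k : int) v : coef (x *~ k) v = coef x v * k.
Proof. have [S1 H1] := coefP x; exact: coef_rep (Rep_scale k H1) v. Qed.

Lemma coefMn x (m : nat) v : coef (m%:R * x) v = coef x v * m%:Z.
Proof. by rewrite mulr_natl pmulrn coefZ. Qed.

Lemma coef_eq0 x : (forall v, coef x v = 0) -> x = 0.
Proof.
move=> H; have [S [_ _ ->]] := coefP x.
by rewrite big1 // => v _; rewrite H mulr0z.
Qed.

Lemma coef_fin x : exists S : seq V, forall v, v \notin S -> coef x v = 0.
Proof. by have [S [_ z _]] := coefP x; exists S. Qed.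

Lemma cancel_nat (m : nat) (x y : R) : (0 < m)%N -> m%:R * x = m%:R * y -> x = y.
Proof.
move=> m0 e; apply/eqP; rewrite -subr_eq0; apply/eqP/coef_eq0 => v.
have : coef (m%:R * x) v = coef (m%:R * y) v by rewrite e.
rewrite !coefMn (mulrC (coef x v)) (mulrC (coef y v)) => /mulfI.
rewrite -[coef (x - y) v]/(coef (x + (y *~ -1)) v) coefD coefZ.
move=> -> //; first by rewrite mulrN1 subrr.
by case: (m) m0.
Qed.

Lemma Dv_coef (m : nat) (x : R) : (0 < m)%N -> Dv m x <-> forall v, (m %| coef x v)%Z.
Proof.
move=> m0; split.
- by case=> y -> v; rewrite coefMn dvdz_mull.
- move=> H; have [S [u z e]] := coefP x.
  exists (\sum_(v <- S) b v *~ (coef x v %/ m)%Z).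
  rewrite {1}e mulr_sumr; apply: eq_bigr => v _.
  by rewrite mulr_natl pmulrn -mulrzA divzK // H.
Qed.

End Coord.

Lemma Fp_nat0 (p m : nat) : prime p -> ((m%:R : 'F_p) = 0) <-> (p %| m)%N.
Proof.
move=> pp; rewrite /dvdn; split=> [h|/eqP h].
- by have := val_Fp_nat pp m; rewrite h => <-.
- by apply: val_inj; rewrite /= val_Fp_nat.
Qed.

Lemma Fp_int0 (p : nat) (z : int) : prime p -> ((z%:~R : 'F_p) = 0) <-> (p %| z)%Z.
Proof.
move=> pp; case: z => m.
- exact: Fp_nat0.
- have -> : (p %| Negz m)%Z = (p %| m.+1)%N by []. rewrite NegzE intrN; split.
  + by move/eqP; rewrite oppr_eq0 => /eqP h; apply/(Fp_nat0 _ pp).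
  + by move/(Fp_nat0 _ pp) => h; change (- (m.+1%:R : 'F_p) = 0); rewrite h oppr0.
Qed.

Lemma Fp_lift (p : nat) (w : 'F_p) : exists z : int, z%:~R = w.
Proof. by exists (val w)%:Z; change ((val w)%:R = w); rewrite natr_Zp. Qed.

Section Idx.
Variable n : nat.
Definition ik (k : nat) : 'I_n.+1 := inord (k %/ n.+1).
Definition jk (k : nat) : 'I_n.+1 := inord (k %% n.+1).

Lemma ik_val k : (k < n.+1 ^ 2 - 1)%N -> (ik k : nat) = (k %/ n.+1)%N.
Proof.
move=> hk; rewrite /ik inordK // ltnS -ltnS ltn_divLR //.
by move: hk; rewrite expnS expn1; lia.
Qed.

Lemma jk_val k : (jk k : nat) = (k %% n.+1)%N.
Proof. by rewrite /jk inordK // ltn_pmod. Qed.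

Lemma not_last k : (k < n.+1 ^ 2 - 1)%N -> ~ (ik k = ord_max /\ jk k = ord_max).
Proof.
move=> hk [/(congr1 val) hi /(congr1 val) hj]; move: hi hj => /=.
rewrite ik_val // jk_val /= => hi hj.
have := divn_eq k n.+1; rewrite hi hj; move: hk; rewrite expnS expn1; lia.
Qed.

Definition idx (i j : 'I_n.+1) : nat := (i * n.+1 + j)%N.

Lemma idx_lt i j : ~ (i = ord_max /\ j = ord_max) -> (idx i j < n.+1 ^ 2 - 1)%N.
Proof.
move=> h; rewrite /idx expnS expn1.
have hi := ltn_ord i; have hj := ltn_ord j.
case: (ltnP i n) => [hi'|hi']; first by nia.
case: (ltnP j n) => [hj'|hj']; first by nia.
exfalso; apply: h; split; apply: val_inj => /=; lia.
Qed.

Lemma idx_ik i j : ik (idx i j) = i.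
Proof.
apply: val_inj; rewrite /ik /idx /= inordK divnMDl // divn_small ?addn0 //.
Qed.

Lemma idx_jk i j : jk (idx i j) = j.
Proof.
apply: val_inj; rewrite /jk /idx /= inordK modnMDl modn_small //.
Qed.

Lemma ikjk_inj k k' : (k < n.+1 ^ 2 - 1)%N -> (k' < n.+1 ^ 2 - 1)%N ->
  ik k = ik k' -> jk k = jk k' -> k = k'.
Proof.
move=> hk hk' /(congr1 val) hi /(congr1 val) hj; move: hi hj => /=.
rewrite !ik_val // !jk_val => hi hj.
by rewrite (divn_eq k n.+1) (divn_eq k' n.+1) hi hj.
Qed.
End Idx.

Section Main.
Variables (R : comRingType) (V : eqType) (b : V -> R).
Hypothesis hb : is_Zbasis b.
Variables (n p r : nat).
Hypothesis pp : prime p.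
Hypothesis r1 : (1 <= r)%N.

Local Notation q := (p ^ r)%N.
Local Notation N := (n.+1 ^ 2 - 1)%N.

Lemma p_gt0 : (0 < p)%N. Proof. exact: prime_gt0. Qed.
Lemma q_gt0 : (0 < q)%N. Proof. by rewrite expn_gt0 p_gt0. Qed.
Lemma p_dvd_q : (p %| q)%N. Proof. exact: dvdn_exp. Qed.
Lemma q0F : ((q%:Z)%:~R : 'F_p) = 0.
Proof. by apply/(Fp_int0 _ pp); exact: p_dvd_q. Qed.

Definition phi (A : 'M[R]_n.+1) (k : 'I_N) (v : V) : 'F_p :=
  ((coef hb ((A - 1%:M) (ik n k) (jk n k)) v %/ q%:Z)%Z)%:~R.

Lemma gam_Y (m : nat) (A : 'M[R]_n.+1) : in_Gamma m A -> exists Y, A - 1%:M = m%:R *: Y.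
Proof.
case=> _ h.
have /fin_all_exists [f hf] : forall i, exists g : 'I_n.+1 -> R,
    forall j, (A - 1%:M) i j = m%:R * g j := fun i => fin_all_exists (h i).
by exists (\matrix_(i, j) f i j); apply/matrixP => i j; rewrite hf !mxE.
Qed.

Lemma phiE (A Y : 'M[R]_n.+1) k v : A - 1%:M = q%:R *: Y ->
  phi A k v = (coef hb (Y (ik n k) (jk n k)) v)%:~R.
Proof.
move=> eA; rewrite /phi eA mxE coefMn mulrC mulKz //.
by have := q_gt0; case: (q).
Qed.

Lemma gam_of (A Y : 'M[R]_n.+1) (m : nat) : \det A = 1 -> A - 1%:M = m%:R *: Y -> in_Gamma m A.
Proof. by move=> d e; split=> // i j; exists (Y i j); rewrite e mxE. Qed.

Lemma gam_mul A B : in_Gamma q A -> in_Gamma q B ->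
  in_Gamma q (A *m B) /\ forall k v, phi (A *m B) k v = phi A k v + phi B k v.
Proof.
move=> gA gB; have [Y eY] := gam_Y gA; have [Z eZ] := gam_Y gB.
have e := mul_gam eY eZ.
split; first by apply: gam_of e; rewrite det_mulmx gA.1 gB.1 mulr1.
move=> k v; rewrite (phiE _ _ e) (phiE _ _ eY) (phiE _ _ eZ) !mxE !coefD coefMn.
by rewrite !intrD intrM q0F mulr0 addr0.
Qed.

Lemma phi_supp A : in_Gamma q A -> forall k, fin_supp (phi A k).
Proof.
move=> gA k; have [Y eY] := gam_Y gA.
have [S hS] := coef_fin hb (Y (ik n k) (jk n k)).
by exists S => v /hS h; rewrite (phiE _ _ eY) h.
Qed.

Lemma kernel A : in_Gamma q A -> ((forall k v, phi A k v = 0) <-> in_Gamma (p ^ r.+1) A).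
Proof.
move=> gA; have [Y eY] := gam_Y gA.
have eA : A = 1%:M + q%:R *: Y by rewrite -eY addrC subrK.
have qp : (p ^ r.+1 = q * p)%N by rewrite expnSr.
split.
- move=> hz.
  have hk : forall k : 'I_N, Dv p (Y (ik n k) (jk n k)).
    move=> k; apply/(Dv_coef hb _ p_gt0) => v.
    by apply/(Fp_int0 _ pp); rewrite -(phiE _ _ eY) hz.
  have hij : forall i j : 'I_n.+1, ~ (i = ord_max /\ j = ord_max) -> Dv p (Y i j).
    move=> i j h; have := hk (Ordinal (idx_lt h)); by rewrite /= idx_ik idx_jk.
  have hLL : Dv p (Y ord_max ord_max).
    have [w hw] := det_lin q Y.
    move: hw; rewrite -eA gA.1 subrr add0r => hw.
    have htr : \tr Y = q%:R * (- w).
      apply: (cancel_nat hb q_gt0).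
      by rewrite mulrA -natrM mulrN -hw opprK.
    have : Dv p (\tr Y - \sum_(i | i != ord_max) Y i i).
      apply: DvD; first by apply: (Dv_dvd p_dvd_q); exists (- w).
      apply: DvN; apply: Dv_sum => i /eqP h; by apply: hij => -[/h].
    by rewrite /mxtrace (bigD1 ord_max) //= addrK.
  split; first exact: gA.1.
  move=> i j.
  have [y ey] : Dv p (Y i j).
    case: (boolP ((i == ord_max) && (j == ord_max))) => [/andP[/eqP -> /eqP ->] //|h].
    by apply: hij => -[ei ej]; move: h; rewrite ei ej !eqxx.
  by exists y; rewrite eY mxE ey qp natrM mulrA.
- case=> _ h k v.
  rewrite (phiE _ _ eY); apply/(Fp_int0 _ pp).
  have [y ey] := h (ik n k) (jk n k).
  suff /(Dv_coef hb _ p_gt0) : Dv p (Y (ik n k) (jk n k)) by apply.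
  exists y; apply: (cancel_nat hb q_gt0).
  by rewrite mulrA -natrM -qp -ey eY mxE.
Qed.

Lemma coef0 v : coef hb 0 v = 0.
Proof. by have := coefZ hb 0 0 v; rewrite mulr0z mulr0. Qed.

Lemma lift_x (g : V -> 'F_p) : fin_supp g -> exists x : R, forall v, (coef hb x v)%:~R = g v.
Proof.
case=> S hS.
exists (\sum_(v <- undup S) b v *~ (val (g v))%:Z) => v.
have H : Rep b (\sum_(v <- undup S) b v *~ (val (g v))%:Z) (undup S)
        (fun v => if v \in S then (val (g v))%:Z else 0).
  split; first exact: undup_uniq.
  - by move=> w; rewrite mem_undup => /negbTE ->.
  - rewrite big_seq_cond [RHS]big_seq_cond; apply: eq_bigr => w /andP[].
    by rewrite mem_undup => ->.
rewrite (coef_rep hb H v); case: ifP => vS.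
- by change ((val (g v))%:R = g v); rewrite natr_Zp.
- by rewrite hS // vS.
Qed.

Lemma phi_comb (A : 'M[R]_n.+1) (x : R) (z : 'I_n.+1 -> 'I_n.+1 -> int) k v :
  A - 1%:M = q%:R *: (\matrix_(a, c) (x *~ z a c)) ->
  phi A k v = (coef hb x v)%:~R * (z (ik n k) (jk n k))%:~R.
Proof. by move=> e; rewrite (phiE _ _ e) mxE coefZ intrM. Qed.

Lemma ij_eq (k k' : 'I_N) i j : ik n k = i -> jk n k = j ->
  ((ik n k' == i) && (jk n k' == j)) = (k' == k).
Proof.
move=> <- <-; apply/idP/idP => [/andP[/eqP h1 /eqP h2]|/eqP -> ]; last by rewrite !eqxx.
by apply/eqP/val_inj/(ikjk_inj (ltn_ord k') (ltn_ord k)).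
Qed.

Lemma E_gam (i j : 'I_n.+1) (x : R) (z : int) : i != j ->
  E i j (q%:R * x *~ z) - 1%:M = q%:R *: (\matrix_(a, c) (x *~ (z * ((a == i) && (c == j) : nat)%:Z))).
Proof.
move=> ij; apply/matrixP => a c; rewrite /E addrC addKr !mxE.
case: (_ && _); rewrite /= ?mulr1z ?mulr0z ?mulr1 ?mulr0 //.
by rewrite mulrzAr.
Qed.

Lemma gen_off (k : 'I_N) (x : R) : ik n k != jk n k ->
  exists M, in_Gamma q M /\ forall k' v, phi M k' v = if k' == k then (coef hb x v)%:~R else 0.
Proof.
move=> h.
have e := E_gam x 1 h.
exists (E (ik n k) (jk n k) (q%:R * x *~ 1)); split; first exact: gam_of (det_E _ h) e.
move=> k' v; rewrite (phi_comb _ _ e) mul1r (ij_eq k' erefl erefl).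
by case: (k' == k); rewrite /= ?mulr1 ?mulr0.
Qed.

Lemma zsimp (b1 b2 b3 b4 : bool) :
  ((b1 : nat)%:Z + (b2 : nat)%:Z - (b3 : nat)%:Z - (b4 : nat)%:Z) + 1 * (b4 : nat)%:Z
    + (-1) * (b1 : nat)%:Z = (b2 : nat)%:Z - (b3 : nat)%:Z.
Proof. ring. Qed.

Lemma gen_diag (k : 'I_N) (x : R) : ik n k = jk n k ->
  exists M, in_Gamma q M /\ forall k' v, phi M k' v = if k' == k then (coef hb x v)%:~R else 0.
Proof.
move=> h.
have iL : ik n k != ord_max.
  apply/eqP => e; apply: (not_last (ltn_ord k)); split => //; by rewrite -h.
have Li : ord_max != ik n k by rewrite eq_sym.
set i := ik n k in h iL Li *; set L : 'I_n.+1 := ord_max in iL Li *.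
set D := E i L 1 *m E L i (q%:R * x) *m E i L (-1).
have eD : D - 1%:M = q%:R *: (\matrix_(a, c) (x *~
    (((a == L) && (c == i) : nat)%:Z + ((a == i) && (c == i) : nat)%:Z
     - ((a == L) && (c == L) : nat)%:Z - ((a == i) && (c == L) : nat)%:Z))).
  rewrite /D D_eq // addrC addKr; apply/matrixP => a c; rewrite !mxE -mulrzr !intrD !intrN.
  ring.
have dD : \det D = 1 by rewrite /D !det_mulmx !det_E // !mulr1.
have gD : in_Gamma q D := gam_of dD eD.
have e1 := E_gam x 1 iL.
have e2 := E_gam x (-1) Li.
have [g12 h12] := gam_mul gD (gam_of (det_E _ iL) e1).
have [g3 h3] := gam_mul g12 (gam_of (det_E _ Li) e2).
exists (D *m E i L (q%:R * x *~ 1) *m E L i (q%:R * x *~ -1)); split => // k' v.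
rewrite h3 h12 (phi_comb _ _ eD) (phi_comb _ _ e1) (phi_comb _ _ e2) -!mulrDr -!intrD zsimp.
have -> : (ik n k' == L) && (jk n k' == L) = false.
  by apply/negbTE/negP => /andP[/eqP a /eqP c]; apply: (not_last (ltn_ord k')).
rewrite (ij_eq k' (i := i) (j := i) erefl (esym h)).
by case: (k' == k); rewrite /= ?mulr1 ?mulr0.
Qed.

Lemma surj (f : 'I_N -> V -> 'F_p) : (forall i, fin_supp (f i)) ->
  exists A, in_Gamma q A /\ forall i v, phi A i v = f i v.
Proof.
move=> hf.
have /fin_all_exists [M hM] : forall k : 'I_N, exists M, in_Gamma q M /\
    forall k' v, phi M k' v = if k' == k then f k v else 0.
  move=> k; have [x hx] := lift_x (hf k).
  have [M [gM hM]] : exists M, in_Gamma q M /\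
      forall k' v, phi M k' v = if k' == k then (coef hb x v)%:~R else 0.
    have [h|h] := eqVneq (ik n k) (jk n k); [exact: gen_diag | exact: gen_off].
  by exists M; split => // k' v; rewrite hM hx.
have H : forall s : seq 'I_N, in_Gamma q (foldr (fun k A => M k *m A) 1%:M s) /\
    forall k' v, phi (foldr (fun k A => M k *m A) 1%:M s) k' v
                 = \sum_(k <- s) (if k' == k then f k v else 0).
  elim => [|k s [gs hs]] /=.
  - have e1 : (1%:M : 'M[R]_n.+1) - 1%:M = q%:R *: 0 by rewrite subrr scaler0.
    split; first exact: gam_of (det1 _ _) e1.
    by move=> k' v; rewrite big_nil (phiE _ _ e1) mxE coef0.
  - have [g h] := gam_mul (hM k).1 gs; split => // k' v.
    by rewrite h hs big_cons (hM k).2.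
exists (foldr (fun k A => M k *m A) 1%:M (index_enum 'I_N)).
have [g h] := H (index_enum 'I_N); split => // k' v; rewrite h.
rewrite (bigD1 k') //= eqxx big1 ?addr0 // => k; by rewrite eq_sym => /negbTE ->.
Qed.

End Main.

Theorem lemma3p7 (R : comRingType) (V : eqType) (b : V -> R)
    (n p r : nat) :
  is_Zbasis b -> (2 <= n)%N -> prime p -> (1 <= r)%N ->
  exists phi : 'M[R]_n -> 'I_(n ^ 2 - 1) -> V -> 'F_p,
    induces_quotient_iso (p ^ r) (p ^ r.+1) phi.
Proof.
move=> hb hn pp hr.
case: n hn => [//|n] _.
exists (@phi R V b hb n p r); split.
- by move=> A gA; apply: phi_supp.
- by move=> A B gA gB i v; rewrite (gam_mul hb pp hr gA gB).2.
- by move=> A gA; apply: kernel.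
- by move=> f hf; apply: surj.
Qed.
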